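(* Let $\mathrm x$ be a binary word of length $m<\Bbbk-1$. Then, as operators on $\widetilde{\mathcal H}=\mathcal H\oplus P'_{[\![1]\!]}\mathcal H$, $$\widetilde U_\theta^*\,(P_{[\![\mathrm x]\!]}\oplus0)\,\widetilde U_\theta=P_{[\![0]\!]}P_{\bar T^{-1}[\![\mathrm x]\!]}\oplus P'_{[\![1]\!]}P_{\bar T^{-1}[\![\mathrm x]\!]},$$ $$\widetilde U_\theta^*\,(0\oplus P'_{[\![1]\!]}P_{[\![\mathrm x]\!]})\,\widetilde U_\theta=P_{[\![1]\!]}P_{\bar T^{-1}[\![\mathrm x]\!]}\oplus0 .$$
   Context: Let $\Bbbk\geq3$ and $\mathcal H=(\mathbb C^2)^{\otimes\Bbbk}$ with orthonormal basis $|\mathrm y\rangle=|\mathrm y_1\rangle\otimes\cdots\otimes|\mathrm y_\Bbbk\rangle$, $\mathrm y_i\in\{0,1\}$. For a binary word $\mathrm w=\mathrm w_1\dots\mathrm w_m$ ($m\leq\Bbbk$), $P_{[\![\mathrm w]\!]}$ is the orthogonal projection onto the span of the $|\mathrm y\rangle$ with $\mathrm y_1\dots\mathrm y_m=\mathrm w$; $[\![\mathrm w]\!]\subset[0,1]$ is the dyadic cylinder of points whose first $m$ binary digits are $\mathrm w$. $\bar T(x)=2x\bmod1$, so $\bar T^{-n}[\![\mathrm w]\!]=\bigcup_{|\mathrm y|=n}[\![\mathrm y\mathrm w]\!]$, and $P_{\bar T^{-n}[\![\mathrm w]\!]}=\sum_{|\mathrm y|=n}P_{[\![\mathrm y\mathrm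 w]\!]}$. Let $\mathbf U$ be a $2\times2$ unitary with all entries of modulus $2^{-1/2}$, $\bar U|\mathrm y\rangle=|\mathrm y_2\rangle\otimes\cdots\otimes|\mathrm y_\Bbbk\rangle\otimes\mathbf U|\mathrm y_1\rangle$, $\sigma$ the unitary exchanging the last two tensor factors, and $P'_{[\![j]\!]}=\bar UP_{[\![j]\!]}\bar U^*$ for $j\in\{0,1\}$. Tower space $\widetilde{\mathcal H}=\mathcal H\oplus P'_{[\![1]\!]}\mathcal H$ with the direct-sum scalar product, and $\widetilde U_\theta(\phi_0,\phi_1)=\big(\sigma\bar UP'_{[\![1]\!]}\phi_1+\bar UP_{[\![0]\!]}\phi_0,\ e^{i\theta}\bar UP_{[\![1]\!]}\phi_0\big)$, $\theta\in\mathbb R$. *)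

(* Defs.v *)
From HB Require Import structures.
From mathcomp Require Import all_boot all_order all_algebra.
From mathcomp Require Import complex.
From mathcomp Require Import all_classical all_reals all_analysis.

Set Implicit Arguments.
Unset Strict Implicit.
Unset Printing Implicit Defensive.

Import Order.TTheory GRing.Theory Num.Theory.
Local Open Scope ring_scope.

(* Basis labels of H = (C^2)^{(x) k}: binary words y = y_1 ... y_k,
   stored as k-tuples (position j of the tuple, 0-based, is y_{j+1}). *)
Definition word (k : nat) := (k.-tuple bool)%type.

Notation vec C k := {ffun word k -> C}.

Section Defs.
Variables (C : numClosedFieldType) (k : nat).

Definition dot (u v : vec C k) : C := \sum_y (u y)^* * v y.

(* Operators given by their matrix elements  K z y = <z|K|y>. *)
Definition kapp (K : word k -> word k -> C) (v : vec C k) : vec C k :=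
  [ffun z => \sum_y K z y * v y].
Definition kadj (K : word k -> word k -> C) : word k -> word k -> C :=
  fun z y => (K y z)^*.

Definition Pw (w : seq bool) (v : vec C k) : vec C k :=
  [ffun y : word k => if take (size w) y == w then v y else 0].

(* P_{T^{-n}[[w]]} = \sum_{|y| = n} P_[[y w]]. *)
Definition PT (n : nat) (w : seq bool) (v : vec C k) : vec C k :=
  \sum_(u : n.-tuple bool) Pw (u ++ w) v.

Definition b2o (b : bool) : 'I_2 := inord (nat_of_bool b).

(* Ubar |y> = |y_2 ... y_k> (x) U |y_1>, i.e.
   <z|Ubar|y> = [z_1..z_{k-1} = y_2..y_k] * <z_k|U|y_1>. *)
Definition Ubar_ker (U : 'M[C]_2) (z y : word k) : C :=
  (if take k.-1 z == behead y then 1 else 0) *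
  U (b2o (last false z)) (b2o (head false y)).

(* sigma: exchange of the last two tensor factors,
   <z|sigma|y> = 1 iff z is y with its last two letters exchanged. *)
Definition sigma_ker (z y : word k) : C :=
  if [&& take (k - 2) z == take (k - 2) y,
         nth false z (k - 2) == nth false y k.-1 &
         nth false z k.-1 == nth false y (k - 2)] then 1 else 0.

Definition Ubar (U : 'M[C]_2) (v : vec C k) : vec C k := kapp (Ubar_ker U) v.
Definition Ubar_adj (U : 'M[C]_2) (v : vec C k) : vec C k :=
  kapp (kadj (Ubar_ker U)) v.
Definition sigma (v : vec C k) : vec C k := kapp sigma_ker v.

Definition Pprime (U : 'M[C]_2) (j : bool) (v : vec C k) : vec C k :=
  Ubar U (Pw [:: j] (Ubar_adj U v)).

(* Tower space  H~ = H (+) P'_[[1]] H, inside H x H. *)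
Definition in_tower (U : 'M[C]_2) (phi : vec C k * vec C k) : Prop :=
  Pprime U true phi.2 = phi.2.

Definition tdot (phi psi : vec C k * vec C k) : C :=
  dot phi.1 psi.1 + dot phi.2 psi.2.

Definition Utilde (U : 'M[C]_2) (c : C) (phi : vec C k * vec C k)
  : vec C k * vec C k :=
  (sigma (Ubar U (Pprime U true phi.2)) + Ubar U (Pw [:: false] phi.1),
   [ffun y => c * Ubar U (Pw [:: true] phi.1) y]).

(* "U~^* A U~ = B as operators on H~", the adjoint U~^* being taken in H~
   for the direct-sum scalar product: B maps H~ into H~, and for all
   phi, chi in H~,  <U~ chi, A U~ phi> = <chi, B phi>. *)
Definition tower_conj_eq (U : 'M[C]_2) (Ut A B : vec C k * vec C k -> vec C k * vec C k)
  : Prop :=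
  forall phi, in_tower U phi ->
    in_tower U (B phi) /\
    forall chi, in_tower U chi -> tdot (Ut chi) (A (Ut phi)) = tdot chi (B phi).

End Defs.

Definition unitary2 (C : numClosedFieldType) (U : 'M[C]_2) : Prop :=
  U *m (map_mx Num.conj U)^T = 1%:M.

Definition expi (R : realType) (theta : R) : R[i] := (cos theta +i* sin theta)%C.

(* Main.v *)
Require Import Defs.
From HB Require Import structures.
From mathcomp Require Import all_boot all_order all_algebra.
From mathcomp Require Import complex.
From mathcomp Require Import all_classical all_reals all_analysis.
From mathcomp Require Import zify.
Import Order.TTheory GRing.Theory Num.Theory.
Local Open Scope ring_scope.
Set Implicit Arguments.
Unset Strict Implicit.
Unset Printing Implicit Defensive.

Section Gen.
Variables (C : numClosedFieldType) (k : nat).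
Implicit Types (u v w : vec C k) (K : word k -> word k -> C).

Lemma dotDl u v w : dot (u + v) w = dot u w + dot v w.
Proof.
by rewrite /dot -big_split; apply: eq_bigr => y _; rewrite ffunE rmorphD mulrDl.
Qed.

Lemma dotDr u v w : dot u (v + w) = dot u v + dot u w.
Proof.
by rewrite /dot -big_split; apply: eq_bigr => y _; rewrite ffunE mulrDr.
Qed.

Lemma dot0l v : dot 0 v = 0.
Proof. by rewrite /dot big1 // => y _; rewrite ffunE rmorph0 mul0r. Qed.

Lemma dot0r v : dot v 0 = 0.
Proof. by rewrite /dot big1 // => y _; rewrite ffunE mulr0. Qed.

Lemma dotC u v : dot u v = (dot v u)^*.
Proof.
rewrite /dot rmorph_sum; apply: eq_bigr => y _.
by rewrite rmorphM /= conjCK mulrC.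
Qed.

Lemma dot_kapp K u v : dot (kapp K u) v = dot u (kapp (kadj K) v).
Proof.
rewrite /dot /kapp.
under eq_bigr do rewrite ffunE rmorph_sum mulr_suml.
under [RHS]eq_bigr do rewrite ffunE mulr_sumr.
rewrite exchange_big /=; apply: eq_bigr => y _; apply: eq_bigr => z _.
by rewrite /kadj rmorphM /= mulrCA mulrA.
Qed.

Lemma kadjK K : kadj (kadj K) = K.
Proof. by rewrite /kadj; apply/funext => z; apply/funext => y; rewrite conjCK. Qed.

Lemma kappD K u v : kapp K (u + v) = kapp K u + kapp K v.
Proof.
apply/ffunP => z; rewrite !ffunE -big_split; apply: eq_bigr => y _.
by rewrite ffunE mulrDr.
Qed.

Lemma kapp0 K : kapp K 0 = 0.
Proof. by apply/ffunP => z; rewrite !ffunE big1 // => y _; rewrite ffunE mulr0. Qed.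

Lemma kappZ K c u : kapp K [ffun y => c * u y] = [ffun y => c * kapp K u y].
Proof.
apply/ffunP => z; rewrite !ffunE mulr_sumr; apply: eq_bigr => y _.
by rewrite ffunE mulrCA.
Qed.

Lemma PwD (s : seq bool) u v : Pw s (u + v) = Pw s u + Pw s v.
Proof. by apply/ffunP => y; rewrite !ffunE; case: ifP; rewrite ?addr0. Qed.

Lemma Pw0 (s : seq bool) : Pw s (0 : vec C k) = 0.
Proof. by apply/ffunP => y; rewrite !ffunE; case: ifP => // ->. Qed.

Lemma PwZ (s : seq bool) c u : Pw s [ffun y => c * u y] = [ffun y => c * Pw s u y].
Proof. by apply/ffunP => y; rewrite !ffunE; case: ifP; rewrite ?mulr0. Qed.

Lemma dot_Pw (s : seq bool) u v : dot (Pw s u) v = dot u (Pw s v).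
Proof.
apply: eq_bigr => y _; rewrite !ffunE.
by case: ifP; rewrite ?rmorph0 ?mul0r ?mulr0.
Qed.

Lemma PwK (s : seq bool) u : Pw s (Pw s u) = Pw s u.
Proof. by apply/ffunP => y; rewrite !ffunE; case: ifP => // ->. Qed.

Lemma dotZ c d u v :
  dot [ffun y => c * u y] [ffun y => d * v y] = c^* * d * dot u v.
Proof.
rewrite /dot mulr_sumr; apply: eq_bigr => y _; rewrite !ffunE rmorphM /=.
by rewrite mulrACA.
Qed.

Lemma dotP01 u v : dot (Pw [:: true] u) (Pw [:: false] v) = 0.
Proof.
rewrite /dot big1 // => y _; rewrite !ffunE.
by case: (take 1 y) => [|[] [|b s]] /=; rewrite ?rmorph0 ?mul0r ?mulr0.
Qed.

End Gen.
Lemma ttkP n (z : n.+1.-tuple bool) : size (take n z) == n.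
Proof. by rewrite size_takel // size_tuple. Qed.
Definition ttk n (z : n.+1.-tuple bool) : n.-tuple bool := Tuple (ttkP z).

Lemma tuple_rcons n (z : n.+1.-tuple bool) :
  val z = rcons (take n z) (nth false z n).
Proof. by rewrite -take_nth ?size_tuple // take_oversize // size_tuple. Qed.

Lemma tuple_cons n (z : n.+1.-tuple bool) : val z = head false z :: behead z.
Proof. by case: z => [[|a s] //]. Qed.

Lemma eq_trc n (z : n.+1.-tuple bool) (s : n.-tuple bool) b :
  (z == [tuple of rcons s b]) = (take n z == s) && (nth false z n == b).
Proof. by rewrite -val_eqE /= {1}tuple_rcons eqseq_rcons. Qed.

Lemma eq_tcons n (y : n.+1.-tuple bool) (t : n.-tuple bool) j :
  (y == [tuple of j :: t]) = (head false y == j) && (behead y == t).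
Proof. by rewrite -val_eqE /= {1}tuple_cons eqseq_cons. Qed.

Lemma take_rcons_size (s : seq bool) b n : size s = n -> take n (rcons s b) = s.
Proof. by move=> <-; rewrite -cats1 take_size_cat. Qed.

Lemma nth_rcons_size (s : seq bool) b n : size s = n -> nth false (rcons s b) n = b.
Proof. by move=> <-; rewrite nth_rcons ltnn eqxx. Qed.

Section Sums.
Variable (C : numClosedFieldType).

Lemma sum_take n (s : n.-tuple bool) (F : n.+1.-tuple bool -> C) :
  \sum_(z : n.+1.-tuple bool) (if take n z == s then F z else 0)
  = \sum_b F [tuple of rcons s b].
Proof.
rewrite big_bool.
transitivity (\sum_(z : n.+1.-tuple bool)
   ((if z == [tuple of rcons s true] then F z else 0) +
    (if z == [tuple of rcons s false] then F z else 0))).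
  apply: eq_bigr => z _; rewrite !eq_trc.
  by case: (take n z == s); case: (nth false z n); rewrite ?addr0 ?add0r.
by rewrite big_split /= -!big_mkcond /= !big_pred1_eq.
Qed.
End Sums.

Section UbarSec.
Variables (C : numClosedFieldType) (n : nat) (U : 'M[C]_2).
Implicit Types (v : vec C n.+1).

Lemma Pw1E j v (y : word n.+1) :
  Pw [:: j] v y = if head false y == j then v y else 0.
Proof. by rewrite ffunE; case: y => [[|a s] //] /=; rewrite take0 eqseq_cons andbT. Qed.

Lemma UbarP1 j v (z : word n.+1) :
  Ubar U (Pw [:: j] v) z =
  U (b2o (last false z)) (b2o j) * v [tuple of j :: ttk z].
Proof.
rewrite /Ubar /kapp ffunE.
rewrite (bigD1 [tuple of j :: ttk z]) //= big1 ?addr0.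
  by rewrite Pw1E /Ubar_ker /= eqxx mul1r eqxx.
move=> y Hy; rewrite Pw1E /Ubar_ker /=.
case: eqP => H1; last by rewrite mul0r mul0r.
case: eqP => H2; last by rewrite mulr0.
by move: Hy; rewrite eq_tcons H2 /ttk /= -H1 !eqxx.
Qed.

Lemma Pw01 v : v = Pw [:: true] v + Pw [:: false] v.
Proof.
apply/ffunP => y; rewrite ffunE !Pw1E.
by case: (head false y); rewrite ?addr0 ?add0r.
Qed.

Lemma UbarE v (z : word n.+1) :
  Ubar U v z = \sum_j U (b2o (last false z)) (b2o j) * v [tuple of j :: ttk z].
Proof.
by rewrite {1}(Pw01 v) /Ubar kappD ffunE -!/(Ubar _ _) !UbarP1 big_bool.
Qed.

Definition bh (y : n.+1.-tuple bool) : n.-tuple bool := behead_tuple y.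

Lemma Ubar_adjE v (y : word n.+1) :
  Ubar_adj U v y =
  \sum_b (U (b2o b) (b2o (head false y)))^* * v [tuple of rcons (bh y) b].
Proof.
rewrite /Ubar_adj /kapp ffunE /kadj /Ubar_ker /=.
pose F := fun z : word n.+1 => (U (b2o (last false z)) (b2o (head false y)))^* * v z.
transitivity (\sum_b F [tuple of rcons (bh y) b]); last first.
  by apply: eq_bigr => b _; rewrite /F /= last_rcons.
rewrite -sum_take; apply: eq_bigr => z _; rewrite /F /=.
by case: eqP => _; rewrite ?rmorphM /= ?rmorph1 ?rmorph0 ?mul1r ?mul0r.
Qed.

End UbarSec.

Lemma b2o0 : b2o false = ord0.
Proof. by apply/val_inj; rewrite /= inordK. Qed.
Lemma b2o1 : b2o true = lift ord0 ord0.
Proof. by apply/val_inj; rewrite /= inordK. Qed.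
Lemma b2o_inj : injective b2o.
Proof. by case; case => // /(congr1 val); rewrite /= !inordK. Qed.

Section Iso.
Variables (C : numClosedFieldType) (n : nat) (U : 'M[C]_2).
Hypothesis hU : unitary2 U.

Lemma uni_col i j :
  \sum_b (U (b2o b) (b2o i))^* * U (b2o b) (b2o j) = (i == j)%:R.
Proof.
have H : (map_mx Num.conj U)^T *m U = 1%:M by apply: mulmx1C.
have := congr1 (fun M : 'M[C]_2 => M (b2o i) (b2o j)) H.
rewrite /= !mxE big_ord_recl big_ord1 big_bool b2o0 b2o1 addrC.
rewrite !mxE (inj_eq b2o_inj) => E; exact: E.
Qed.

Lemma UaUb (v : vec C n.+1) : Ubar_adj U (Ubar U v) = v.
Proof.
apply/ffunP => y; rewrite Ubar_adjE.
under eq_bigr do rewrite UbarE mulr_sumr.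
rewrite exchange_big /=.
transitivity (\sum_j (head false y == j)%:R * v [tuple of j :: bh y]).
  apply: eq_bigr => j _; rewrite -uni_col mulr_suml; apply: eq_bigr => b _.
  rewrite last_rcons mulrA; congr (_ * v _); apply/val_inj => /=.
  by rewrite take_rcons_size // size_tuple.
rewrite big_bool.
have -> : y = [tuple of head false y :: bh y] by apply/val_inj; rewrite /= {1}tuple_cons.
by case: (head false y) => /=; rewrite ?mul1r ?mul0r ?addr0 ?add0r; congr (v _); apply: val_inj.
Qed.

End Iso.

Section Spec.
Variables (C : numClosedFieldType) (m : nat).
Implicit Types (v : vec C m.+3) (z y : word m.+3).

Lemma swapwP z :
  size (rcons (rcons (take m.+1 z) (nth false z m.+2)) (nth false z m.+1)) == m.+3.
Proof. rewrite !size_rcons size_takel ?size_tuple ?eqxx //; lia. Qed.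
Definition swapw z : word m.+3 := Tuple (swapwP z).

Lemma val_decomp z :
  val z = rcons (rcons (take m.+1 z) (nth false z m.+1)) (nth false z m.+2).
Proof. rewrite {1}tuple_rcons; congr rcons; rewrite -take_nth ?size_tuple //; lia. Qed.

Lemma size_take1 z : size (take m.+1 z) = m.+1.
Proof. rewrite size_takel ?size_tuple //; lia. Qed.

Lemma take_sw z : take m.+1 (swapw z) = take m.+1 z.
Proof. by rewrite /= -!cats1 -catA take_size_cat // size_take1. Qed.

Lemma nth_sw1 z : nth false (swapw z) m.+1 = nth false z m.+2.
Proof. by rewrite /= nth_rcons size_rcons size_take1 ltnSn nth_rcons size_take1 ltnn eqxx. Qed.

Lemma nth_sw2 z : nth false (swapw z) m.+2 = nth false z m.+1.
Proof. by rewrite /= nth_rcons size_rcons size_take1 ltnn eqxx. Qed.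

Lemma swapwK z : swapw (swapw z) = z.
Proof.
apply/val_inj; rewrite [in RHS]val_decomp.
by rewrite [LHS]/= take_sw nth_sw1 nth_sw2.
Qed.

Lemma swapw_inj : injective swapw.
Proof. exact: can_inj swapwK. Qed.

Lemma sigmaE v z : sigma v z = v (swapw z).
Proof.
rewrite /sigma /kapp ffunE (bigD1 (swapw z)) //= big1 ?addr0.
  rewrite /sigma_ker (_ : (m.+3 - 2)%N = m.+1) //= take_sw nth_sw1 nth_sw2 !eqxx.
  by rewrite mul1r.
move=> y Hy; rewrite /sigma_ker (_ : (m.+3 - 2)%N = m.+1) //=.
case: and3P => [[/eqP H1 /eqP H2 /eqP H3]|]; last by rewrite mul0r.
case/eqP: Hy; apply/val_inj; rewrite val_decomp /=.
by rewrite -H1 -H2 -H3.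
Qed.

Lemma sigmaK v : sigma (sigma v) = v.
Proof. by apply/ffunP => z; rewrite !sigmaE swapwK. Qed.

Lemma sigmaD u v : sigma (u + v) = sigma u + sigma v.
Proof. exact: kappD. Qed.

Lemma dot_sigma u v : dot (sigma u) v = dot u (sigma v).
Proof.
rewrite /dot (reindex_inj swapw_inj) /=; apply: eq_bigr => z _.
by rewrite (sigmaE u (swapw z)) (sigmaE v z) swapwK.
Qed.

Lemma Pw_sigma (x : seq bool) v : (size x <= m.+1)%N ->
  Pw x (sigma v) = sigma (Pw x v).
Proof.
move=> hx; apply/ffunP => z; rewrite [in LHS]ffunE [in RHS]sigmaE sigmaE ffunE.
by rewrite -[take (size x) (swapw z)](take_takel _ hx) take_sw take_takel.
Qed.

End Spec.

Section Spec2.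
Variables (C : numClosedFieldType) (U : 'M[C]_2).

Lemma PT1E n (x : seq bool) (v : vec C n.+1) y :
  PT 1 x v y = if take (size x) (behead y) == x then v y else 0.
Proof.
rewrite /PT sum_ffunE (bigD1 [tuple head false y]) //= big1 ?addr0.
  rewrite ffunE /=; case: y => [[|a s] //= Hs].
  by rewrite eqseq_cons eqxx.
move=> u Hne; rewrite ffunE; case: ifP => // H.
case: u Hne H => [[|a [|b s]] //= Hu] Hne.
move: Hne; case: y => [[|c t] //= Ht] Hne; rewrite eqseq_cons => /andP [/eqP Eca _].
by move: Hne; rewrite -val_eqE /= Eca eqxx.
Qed.

Lemma PwUb n (x : seq bool) (v : vec C n.+1) : (size x <= n)%N ->
  Pw x (Ubar U v) = Ubar U (PT 1 x v).
Proof.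
move=> hx; apply/ffunP => z; rewrite [in LHS]ffunE /Ubar /kapp !ffunE.
case: ifP => H.
  apply: eq_bigr => y _; rewrite PT1E /Ubar_ker /=.
  case: eqP => E; last by rewrite !mul0r.
  by rewrite -E take_takel // H.
symmetry; apply: big1 => y _; rewrite PT1E /Ubar_ker /=.
case: eqP => E; last by rewrite !mul0r.
by rewrite -E take_takel // H mulr0.
Qed.

Lemma PjPT n j (x : seq bool) (v : vec C n.+1) :
  Pw [:: j] (PT 1 x v) = PT 1 x (Pw [:: j] v).
Proof.
apply/ffunP => y; rewrite Pw1E !PT1E Pw1E.
by case: ifP; case: ifP.
Qed.

End Spec2.

Section Z.
Variables (C : numClosedFieldType) (m : nat) (U : 'M[C]_2).
Hypothesis hU : unitary2 U.

Lemma val_sw_rcons (s : m.+2.-tuple bool) b :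
  (swapw [tuple of rcons s b] : seq bool) = rcons (rcons (take m.+1 s) b) (nth false s m.+1).
Proof.
have hs : size s = m.+2 by rewrite size_tuple.
rewrite /= nth_rcons_size // nth_rcons hs ltnSn.
by rewrite -[rcons s b]cats1 takel_cat // hs.
Qed.

Lemma Zlemma (x : seq bool) (a : vec C m.+3) : (size x <= m.+1)%N ->
  Pw [:: false] (Ubar_adj U (Pw x (sigma (Ubar U (Ubar U (Pw [:: true] a)))))) = 0.
Proof.
move=> hx; apply/ffunP => y; rewrite Pw1E [RHS]ffunE.
case: eqP => Hy //; rewrite Ubar_adjE Hy.
set s := bh y.
pose G := if take (size x) s == x then
   \sum_j U (b2o (nth false s m.+1)) (b2o j) * a [tuple of true :: [tuple of j :: ttk s]]
   else 0.
have Hw : forall b, Pw x (sigma (Ubar U (Ubar U (Pw [:: true] a)))) [tuple of rcons s b]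
          = U (b2o b) (b2o true) * G.
  move=> b; rewrite ffunE sigmaE.
  have hs : size s = m.+2 by rewrite size_tuple.
  rewrite [take _ (rcons _ _)](_ : _ = take (size x) s); last first.
    by rewrite -cats1 takel_cat // hs ltnW.
  rewrite /G; case: ifP => _; last by rewrite mulr0.
  rewrite UbarE mulr_sumr; apply: eq_bigr => j _.
  rewrite UbarP1.
  have E1 : last false (swapw [tuple of rcons s b]) = nth false s m.+1.
    by rewrite val_sw_rcons last_rcons.
  have E2 : (ttk (swapw [tuple of rcons s b]) : seq bool) = rcons (take m.+1 s) b.
    rewrite -[LHS]/(take m.+2 (swapw [tuple of rcons s b])) val_sw_rcons.
    by rewrite take_rcons_size // size_rcons size_takel ?hs.
  have E3 : last j (ttk (swapw [tuple of rcons s b])) = b by rewrite E2 last_rcons.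
  rewrite E1 /= E3 mulrCA; congr (_ * (_ * a _)).
  apply/val_inj => /=; rewrite E2 take_rcons_size //.
  by rewrite size_takel ?hs.
under eq_bigr do rewrite Hw mulrA.
by rewrite -mulr_suml uni_col // mul0r.
Qed.

End Z.

Lemma expi_norm (R : realType) (t : R) : (expi t)^* * expi t = 1.
Proof.
by rewrite /expi mulrC -normCK normc_def /= cos2Dsin2 sqrtr1 expr1n.
Qed.

Section Ops.
Variables (C : numClosedFieldType) (n : nat) (U : 'M[C]_2).
Hypothesis hU : unitary2 U.
Implicit Types (u v : vec C n.+1).

Lemma dot_Ub u v : dot (Ubar U u) v = dot u (Ubar_adj U v).
Proof. exact: dot_kapp. Qed.

Lemma dot_Ua u v : dot (Ubar_adj U u) v = dot u (Ubar U v).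
Proof. by rewrite /Ubar_adj dot_kapp kadjK. Qed.

Lemma dot_Pp u v : dot (Pprime U true u) v = dot u (Pprime U true v).
Proof. by rewrite /Pprime dot_Ub dot_Pw dot_Ua. Qed.

Lemma PpK v : Pprime U true (Pprime U true v) = Pprime U true v.
Proof. by rewrite /Pprime UaUb // PwK. Qed.

Lemma PpUbP1 v : Pprime U true (Ubar U (Pw [:: true] v)) = Ubar U (Pw [:: true] v).
Proof. by rewrite /Pprime UaUb // PwK. Qed.

Lemma Pp0 : Pprime U true (0 : vec C n.+1) = 0.
Proof. by rewrite /Pprime /Ubar_adj kapp0 Pw0 /Ubar kapp0. Qed.

Lemma PpZ c v : Pprime U true [ffun y => c * v y] = [ffun y => c * Pprime U true v y].
Proof. by rewrite /Pprime /Ubar_adj kappZ PwZ /Ubar kappZ. Qed.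

End Ops.

Section Cross.
Variables (C : numClosedFieldType) (m : nat) (U : 'M[C]_2).
Hypothesis hU : unitary2 U.

Lemma Cross (x : seq bool) (a b : vec C m.+3) : (size x <= m.+1)%N ->
  Pprime U true a = a ->
  dot (sigma (Pw x (Ubar U a))) (Ubar U (Pw [:: false] b)) = 0.
Proof.
move=> hx ha.
by rewrite -Pw_sigma // -dot_Ua -dot_Pw -{1}ha /Pprime (Zlemma hU _ hx) dot0l.
Qed.
End Cross.

Theorem proposition7 (R : realType) (k : nat) (U : 'M[R[i]]_2) (theta : R)
  (x : seq bool) :
  (3 <= k)%N ->
  unitary2 U ->
  (forall a b : 'I_2, `|U a b| = (sqrtC 2)^-1) ->
  (size x < k.-1)%N ->
  tower_conj_eq (k := k) U (Utilde U (expi theta))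
    (fun psi => (Pw x psi.1, 0))
    (fun phi => (Pw [:: false] (PT 1 x phi.1),
                 Pprime U true (PT 1 x phi.2)))
  /\
  tower_conj_eq (k := k) U (Utilde U (expi theta))
    (fun psi => (0, Pprime U true (Pw x psi.2)))
    (fun phi => (Pw [:: true] (PT 1 x phi.1), 0)).
Proof.
case: k => [|[|[|m]]] // _ hU _ hx.
have hx1 : (size x <= m.+1)%N by [].
have hx2 : (size x <= m.+2)%N by apply: ltnW.
split.
  move=> [phi1 phi2] /= hphi; split; first by rewrite /in_tower /= PpK.
  move=> [chi1 chi2] /= hchi.
  rewrite /in_tower /= in hphi hchi.
  rewrite /tdot /Utilde /= hphi hchi dot0r addr0.
  rewrite PwD Pw_sigma // !dotDl !dotDr.
  rewrite [dot (Ubar U _) (sigma _)]dotC Cross // rmorph0 add0r.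
  rewrite -[dot (sigma _) (Pw _ _)]dot_Pw Pw_sigma // Cross // addr0.
  rewrite dot_sigma sigmaK !PwUb // !dot_Ub !UaUb //.
  rewrite dot_Pw -PjPT PwK.
  by rewrite -dot_Pp hchi addrC.
move=> [phi1 phi2] /= hphi; split; first by rewrite /in_tower /= Pp0.
move=> [chi1 chi2] /= hchi.
rewrite /tdot /Utilde /= dot0r add0r dot0r addr0.
rewrite PwZ PpZ dotZ expi_norm mul1r.
rewrite -dot_Pp PpUbP1 // PwUb // dot_Ub UaUb //.
by rewrite dot_Pw -PjPT PwK.
Qed.
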